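(* Let $\varepsilon>0$ and let $\mathcal Q$ be either the Laplace gradient mechanism or the projected random sign (PRS) mechanism (both defined below, with parameters $C>0$ and $1\le\hat d\le d$). Consider the algorithm PGC-A3C: there are $N$ agents, agent $n$ having a private environment parameter $\psi_n\in\Psi$ determining its local transition dynamics; the central aggregator holds global parameters $\theta\in\mathbb{R}^d$ (initialized independently of the agents) and a buffer $B$ (initially empty). Each agent $n$ (submitting exactly once; submissions are received in order $n=1,\dots,N$) copies the current global parameters $\theta'\leftarrow\theta$ (which are a function of previously received reports only), runs an episode in its own environment, computes a gradient $\mathbf g_n\in\mathbb{R}^d$ of its empirical loss at $\theta'$ (so the conditional law of $\mathbf g_n$ given everything previously received depends only on $\psi_n$ and $\theta'$), and sends $\tilde{\mathbf g}_n=\mathcal Q(\mathbf g_n)$ computed with fresh randomness. The aggregator adds $\tilde{\mathbf g}_n$ to $B$ and, whenever $|B|$ reaches a fixed maximum size, updates $\theta\leftarrow\theta-\eta\frac1{|B|}\sum_{\tilde{\mathbf g}\in B}\tilde{\mathbf g}$ ($\eta>0$) and clears $B$. Then PGC-A3C satisfies $\varepsilon$-LDP for all local agents: for each $n$, each fixed $(\psi_m)_{m\ne n}$, all $\psi,\psi'\in\Psi$ and every measurable event $E$ concerning all reports $\tilde{\mathbf g}_1,\dots,\tilde{\mathbf g}_N$ and all global parameters computed by the aggregator, $\Pr(E\mid\psi_n=\psi)\le e^{\varepsilon}\Pr(E\mid\psi_n=\psi')$; in particular each report satisfies $\Pr(\tilde{\mathbf g}_n\in G\mid\psi_n=\psi,\tilde{\mathbf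 g}_1,\dots,\tilde{\mathbf g}_{n-1})\le e^{\varepsilon}\Pr(\tilde{\mathbf g}_n\in G\mid\psi_n=\psi',\tilde{\mathbf g}_1,\dots,\tilde{\mathbf g}_{n-1})$ for all measurable $G\subseteq\mathbb{R}^d$.
   Context: Laplace gradient mechanism: $\mathcal Q(\mathbf g)=\bar{\mathbf g}+\mathbf z$ with $\bar{\mathbf g}=\mathbf g/\max\{1,\|\mathbf g\|_1/(C/2)\}$ and $\mathbf z$ having i.i.d. coordinates of density $\frac{\varepsilon}{2C}\exp(-\frac{\varepsilon}{C}|z|)$. PRS mechanism: draw $\mathbf M\in\mathbb{R}^{\hat d\times d}$ with i.i.d. entries $-\sqrt3$ (prob. $1/6$), $0$ (prob. $2/3$), $+\sqrt3$ (prob. $1/6$); set $\mathbf u=\mathbf M\mathbf g$, $\bar u_i=\min\{C,\max\{-C,u_i\}\}$, and independently $\tilde u_i=+C$ with probability $\frac{1}{e^{\varepsilon/\hat d}+1}+\frac{\bar u_i+C}{2C}\frac{e^{\varepsilon/\hat d}-1}{e^{\varepsilon/\hat d}+1}$, else $-C$; output $\mathbf M^\top\tilde{\mathbf u}$. All mechanism randomness is independent of everything else. The specific form of the empirical A3C loss used to compute $\mathbf g_n$ is irrelevant to the claim beyond the stated dependence structure. *)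

(* Defs.v *)
From HB Require Import structures.
From mathcomp Require Import all_boot all_order all_algebra.
From mathcomp Require Import all_classical all_reals all_analysis.

Set Implicit Arguments.
Unset Strict Implicit.
Unset Printing Implicit Defensive.

Import Order.TTheory GRing.Theory Num.Theory.
Local Open Scope classical_set_scope.
Local Open Scope ring_scope.

(* Vectors of R^d are represented as d.-tuple R, which carries the product
   (= Borel) sigma-algebra of mathcomp-analysis. *)
Notation vecR R d := (d.-tuple R).

Section Vec.
Variables (R : realType) (d : nat).

Definition vzero : vecR R d := [tuple (0 : R) | i < d].
Definition vsub (a b : vecR R d) : vecR R d := [tuple tnth a i - tnth b i | i < d].
Definition vscale (c : R) (a : vecR R d) : vecR R d := [tuple c * tnth a i | i < d].
Definition vsum (s : seq (vecR R d)) : vecR R d :=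
  [tuple \sum_(x <- s) tnth x i | i < d].
Definition l1norm (a : vecR R d) : R := \sum_(i < d) `|tnth a i|.
End Vec.

Section Laplace.
Variables (R : realType) (d : nat) (eps C : R).

Definition lap_clip (g : vecR R d) : vecR R d :=
  [tuple tnth g i / Num.max 1 (l1norm g / (C / 2)) | i < d].

Definition lap_density (z : R) : R := eps / (2 * C) * expR (- (eps / C * `|z|)).

(* iterated Lebesgue integral against the product of k Laplace densities:
   lap_iter k F = int ... int F [:: z_0; ...; z_{k-1}] prod_i dens(z_i) dz_i *)
Fixpoint lap_iter (k : nat) (F : seq R -> \bar R) : \bar R :=
  match k with
  | 0 => F [::]
  | k'.+1 => (\int[@lebesgue_measure R]_z
                ((lap_density z)%:E * lap_iter k' (fun zs => F (z :: zs))))%E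
  end.

(* expectation of F(Q(g)) for the Laplace mechanism Q(g) = gbar + z *)
Definition laplace_mech_int (g : vecR R d) (F : vecR R d -> \bar R) : \bar R :=
  lap_iter d (fun zs => F [tuple tnth (lap_clip g) i + nth 0 zs i | i < d]).
End Laplace.

Section PRS.
Variables (R : realType) (d dh : nat) (eps C : R).

(* a random matrix M in R^{dh x d} is encoded entrywise by 'I_3:
   0 |-> -sqrt 3 (prob 1/6), 1 |-> 0 (prob 2/3), 2 |-> +sqrt 3 (prob 1/6) *)
Definition prs_code := {ffun 'I_dh * 'I_d -> 'I_3}.

Definition prs_entry_val (c : 'I_3) : R :=
  if val c == 0%N then - Num.sqrt 3 else if val c == 1%N then 0 else Num.sqrt 3.
Definition prs_entry_prob (c : 'I_3) : R :=
  if val c == 1%N then 2 / 3 else 1 / 6.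

Definition prs_matrix (M : prs_code) : 'M[R]_(dh, d) :=
  \matrix_(i, j) prs_entry_val (M (i, j)).
Definition prs_matrix_prob (M : prs_code) : R :=
  \prod_(ij : 'I_dh * 'I_d) prs_entry_prob (M ij).

Definition prs_u (M : prs_code) (g : vecR R d) (i : 'I_dh) : R :=
  \sum_(j < d) prs_matrix M i j * tnth g j.
Definition prs_ubar (M : prs_code) (g : vecR R d) (i : 'I_dh) : R :=
  Num.min C (Num.max (- C) (prs_u M g i)).
(* probability that  utilde_i = +C *)
Definition prs_plus_prob (M : prs_code) (g : vecR R d) (i : 'I_dh) : R :=
  let a := expR (eps / dh%:R) in
  1 / (a + 1) + (prs_ubar M g i + C) / (2 * C) * ((a - 1) / (a + 1)).

(* signs s : true means utilde_i = +C, false means utilde_i = -C *)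
Definition prs_sign_prob (M : prs_code) (g : vecR R d) (s : {ffun 'I_dh -> bool}) : R :=
  \prod_(i < dh) (if s i then prs_plus_prob M g i else 1 - prs_plus_prob M g i).

Definition prs_output (M : prs_code) (s : {ffun 'I_dh -> bool}) : vecR R d :=
  [tuple \sum_(i < dh) prs_matrix M i j * (if s i then C else - C) | j < d].

Definition prs_mech_int (g : vecR R d) (F : vecR R d -> \bar R) : \bar R :=
  (\sum_(M : prs_code) \sum_(s : {ffun 'I_dh -> bool})
     (prs_matrix_prob M * prs_sign_prob M g s)%:E * F (prs_output M s))%E.
End PRS.

Inductive mech_kind := Laplace_mech | PRS_mech of nat .

Definition mech_ok (k : mech_kind) (d : nat) : Prop :=
  match k with Laplace_mech => True | PRS_mech dh => (1 <= dh <= d)%N end.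

(* mech_int k eps C g F = E[ F(Q(g)) ], Q computed with fresh randomness *)
Definition mech_int (R : realType) (d : nat) (k : mech_kind) (eps C : R)
  (g : vecR R d) (F : vecR R d -> \bar R) : \bar R :=
  match k with
  | Laplace_mech => laplace_mech_int eps C g F
  | PRS_mech dh => prs_mech_int dh eps C g F
  end.

Section PGCA3C.
Variables (R : realType) (d : nat) (eps C eta : R) (Bmax : nat) (k : mech_kind).
Variables (Psi : Type) (G : Psi -> R.-pker (vecR R d) ~> (vecR R d)).

Fixpoint aggregate (theta : vecR R d) (buf hist : seq (vecR R d)) : vecR R d :=
  match hist with
  | [::] => theta
  | y :: h =>
      let buf' := rcons buf y in
      if size buf' == Bmax
      then aggregate (vsub theta (vscale (eta / (size buf')%:R) (vsum buf'))) [::] h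
      else aggregate theta buf' h
  end.

Definition global_params (theta0 : vecR R d) (hist : seq (vecR R d)) : vecR R d :=
  aggregate theta0 [::] hist.

(* law of the report of an agent with environment parameter psi, copying
   global parameters theta' : expectation of F(Q(g)) with g ~ G psi theta' *)
Definition report_int (psi : Psi) (theta' : vecR R d) (F : vecR R d -> \bar R)
  : \bar R :=
  (\int[G psi theta']_g mech_int k eps C g F)%E.

Definition report_prob (psi : Psi) (theta' : vecR R d) (A : set (vecR R d)) : \bar R :=
  report_int psi theta' (fun y => (\1_A y)%:E).

(* sequential run of the remaining m agents, starting from the history hist
   of already received reports; agent with 0-based index (size hist) has
   environment parameter psis (size hist). *)
Fixpoint run_int (psis : nat -> Psi) (m : nat) (theta0 : vecR R d)
  (hist : seq (vecR R d)) (F : seq (vecR R d) -> \bar R) : \bar R :=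
  match m with
  | 0 => F hist
  | m'.+1 => report_int (psis (size hist)) (global_params theta0 hist)
               (fun y => run_int psis m' theta0 (rcons hist y) F)
  end.

(* probability of an event E on (theta0, (report_1, ..., report_N)) *)
Definition pgc_prob (N : nat) (P0 : probability (vecR R d) R) (psis : nat -> Psi)
  (E : set (vecR R d * N.-tuple (vecR R d))) : \bar R :=
  (\int[P0]_theta0
     run_int psis N theta0 [::]
       (fun h => (\1_E (theta0, (insubd (nseq_tuple N (vzero R d)) h : N.-tuple _)))%:E))%E.
End PGCA3C.

Definition set_psi (Psi : Type) (psis : nat -> Psi) (n : nat) (psi : Psi) : nat -> Psi :=
  fun m => if m == n then psi else psis m.

(* Main.v *)
Require Import Defs.
From HB Require Import structures.
From mathcomp Require Import all_boot all_order all_algebra.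
From mathcomp Require Import all_classical all_reals all_analysis.
From mathcomp Require Import ring lra.

Module ModGen.
Import Order.TTheory GRing.Theory Num.Theory.
Import numFieldNormedType.Exports.
Local Open Scope classical_set_scope.
Local Open Scope ring_scope.

Section S.
Context {R : realType}.
Local Notation LT := (measurableTypeR R).
Lemma shift_meas (t : R) : measurable_fun [set: LT] (fun x : LT => (x : R) - t : LT).
Proof.
apply: measurable_realfun.measurable_funB => //.
Qed.

Lemma leb_shift (t : R) (A : set LT) : measurable A ->
  lebesgue_measure ((fun x : LT => (x : R) - t : LT) @^-1` A) = lebesgue_measure A.
Proof.
move=> mA.
have mf := shift_meas t.
pose mu : {measure set LT -> \bar R} := @measure_function_pushforward__canonical__measure_function_Measure _ _ _ _ R lebesgue_measure _ mf.
have := (@lebesgue_measure_unique R mu _ A mA).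
rewrite /mu /pushforward /= => ->//.
move=> X [[a b] _ <-]; rewrite /mu /pushforward /=.
have -> : (fun x : LT => (x:R) - t : LT) @^-1` `]a, b]%classic = `]a + t, b + t]%classic.
  apply/seteqP; split => x /=; rewrite !in_itv /= ?lerBrDr ?ltrBrDr ?ltrBlDr ?lerBlDr //.
rewrite !lebesgue_measure_itv /= !lte_fin ltrD2r.
case: ifP => // _; rewrite -!EFinD; congr (_%:E); lra.
Qed.


Definition shiftf (t : R) (x : LT) : LT := (x : R) - t.

Section ShiftFun.
Import HBNNSimple.
Variables (h : {nnsfun LT >-> R}) (t : R).
Definition shf (x : LT) : R := h (shiftf t x).
Let mshf : measurable_fun setT shf.
Proof. exact: measurableT_comp (shift_meas t). Qed.
Let fshf : finite_set (range shf).
Proof. apply: sub_finite_set (fimfunP h) => _ [x _ <-]; by exists (shiftf t x). Qed.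
Let pshf : forall x, (0 <= shf x)%R.
Proof. by move=> x; rewrite /shf fun_ge0. Qed.
HB.instance Definition _ := isMeasurableFun.Build _ _ _ _ shf mshf.
HB.instance Definition _ := FiniteImage.Build _ _ shf fshf.
HB.instance Definition _ := isNonNegFun.Build _ _ shf pshf.
Definition shf_nnsfun : {nnsfun LT >-> R} := shf.

Lemma sintegral_shf : sintegral lebesgue_measure shf_nnsfun = sintegral lebesgue_measure h.
Proof.
rewrite !sintegralET; apply: eq_fsbigr => y _.
congr (_ * _)%E.
have -> : shf_nnsfun @^-1` [set y] = shiftf t @^-1` (h @^-1` [set y]) by [].
by rewrite leb_shift.
Qed.
End ShiftFun.

Local Open Scope ereal_scope.

Lemma integral_shift_le (f : LT -> \bar R) (t : R) : (forall x, 0 <= f x) ->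
  \int[lebesgue_measure]_x f ((x : R) + t)%R <= \int[lebesgue_measure]_x f x.
Proof.
move=> f0; rewrite !ge0_integralTE //.
apply: ge_ereal_sup => _ [h hle <-].
rewrite -(sintegral_shf h t); apply: ereal_sup_ubound; exists (shf_nnsfun h t) => //= x.
have := hle (shiftf t x); rewrite /shiftf /= subrK; exact.
Qed.
End S.

Section Gen.
Local Open Scope ereal_scope.
Context d (T : measurableType d) (R : realType) (mu : {measure set T -> \bar R}).
Import HBNNSimple.

Lemma integral_mono_nm (f g : T -> \bar R) : (forall x, 0 <= f x) ->
  (forall x, f x <= g x) -> \int[mu]_x f x <= \int[mu]_x g x.
Proof.
move=> f0 fg; rewrite !ge0_integralTE //; last by move=> x; apply: le_trans (fg x).
apply: ereal_sup_le => _ [h hle <-]; exists h => // x; exact: le_trans (fg x).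
Qed.

Lemma integral_scale_le (f : T -> \bar R) (c : R) : (0 < c)%R -> (forall x, 0 <= f x) ->
  \int[mu]_x (c%:E * f x) <= c%:E * \int[mu]_x f x.
Proof.
move=> c0 f0; rewrite !ge0_integralTE //; last by move=> x; rewrite mule_ge0 // lee_fin ltW.
apply: ge_ereal_sup => _ [h hle <-].
have ci0 : (0 <= c^-1)%R by rewrite invr_ge0 ltW.
have -> : sintegral mu h = c%:E * sintegral mu (scale_nnsfun h ci0).
  rewrite /scale_nnsfun /= sintegralrM muleA -EFinM mulfV ?gt_eqF // mul1e.
  by apply: eq_sintegral => x /=.
apply: lee_wpmul2l; first by rewrite lee_fin ltW.
apply: ereal_sup_ubound; exists (scale_nnsfun h ci0) => // x /=.
have := hle x; have := f0 x; case: (f x) => [r| |] //=; rewrite ?lee_fin.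
- by move=> _ H; rewrite mulrC ler_pdivrMr // mulrC.
- by move=> *; rewrite leey.
Qed.
End Gen.
Arguments integral_mono_nm {d T R} mu f g.
Arguments integral_scale_le {d T R} mu f c.
Arguments integral_shift_le {R} f t.
Section TwoProb.
Local Open Scope ereal_scope.
Context d (T : measurableType d) (R : realType).

Lemma two_prob_le (mu nu : {measure set T -> \bar R}) (x0 : T)
  (mu1 : mu setT = 1) (nu1 : nu setT = 1) (h : T -> \bar R) (c : R) (c0 : (0 < c)%R)
  (h0 : forall x, 0 <= h x) (H : forall x y, h x <= c%:E * h y) :
  \int[mu]_x h x <= c%:E * \int[nu]_x h x.
Proof.
set y := ereal_sup (range h).
have hy x : h x <= y by apply: ereal_sup_ubound; exists x.
have y0 : 0 <= y by apply: le_trans (hy x0).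
have ci0 : (0 <= c^-1)%R by rewrite invr_ge0 ltW.
have cK z : c^-1%:E * (c%:E * z) = z by rewrite muleA -EFinM mulVf ?gt_eqF // mul1e.
have cK' z : c%:E * (c^-1%:E * z) = z by rewrite muleA -EFinM mulfV ?gt_eqF // mul1e.
have yc x' : c^-1%:E * y <= h x'.
  rewrite -(cK (h x')); apply: lee_wpmul2l; first by rewrite lee_fin.
  by apply: ge_ereal_sup => _ [x _ <-]; exact: H.
apply: (@le_trans _ _ y).
  apply: le_trans (integral_mono_nm mu h (cst y) h0 hy) _.
  by rewrite integral_cst // mu1 mule1.
rewrite -{1}(cK' y); apply: lee_wpmul2l; first by rewrite lee_fin ltW.
have c0y : forall x : T, 0 <= cst (c^-1%:E * y) x by move=> ?; rewrite mule_ge0 // lee_fin.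
apply: le_trans (integral_mono_nm nu (cst (c^-1%:E * y)) h c0y yc).
by rewrite integral_cst // nu1 mule1.
Qed.
End TwoProb.

End ModGen.
Import ModGen.

Module ModL.
Import Order.TTheory GRing.Theory Num.Theory.
Local Open Scope classical_set_scope.
Local Open Scope ring_scope.

Section Lap.
Context {R : realType} (eps C : R) (eps0 : 0 < eps) (C0 : 0 < C).

Lemma dens_ge0 z : 0 <= lap_density eps C z.
Proof. by rewrite /lap_density mulr_ge0 ?expR_ge0 // divr_ge0 ?ltW // mulr_gt0. Qed.

Lemma dens_ratio (a b w : R) :
  lap_density eps C (w - a) <= expR (eps / C * `|a - b|) * lap_density eps C (w - b).
Proof.
rewrite /lap_density mulrCA; apply: ler_wpM2l; first by rewrite divr_ge0 ?ltW ?mulr_gt0.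
rewrite -expRD ler_expR.
have e0 : 0 <= eps / C by rewrite divr_ge0 ?ltW.
have tri : `|w - b| <= `|w - a| + `|a - b|.
  by have := ler_normD (w - a) (a - b); rewrite -addrA addKr.
have := ler_wpM2l e0 tri; rewrite mulrDr; lra.
Qed.

Local Open Scope ereal_scope.

Lemma lap_1d (J : R -> \bar R) (J0 : forall w, 0 <= J w) (a b : R) :
  \int[@lebesgue_measure R]_z ((lap_density eps C z)%:E * J (a + z)%R)
  <= (expR (eps / C * `|a - b|))%:E *
     \int[@lebesgue_measure R]_z ((lap_density eps C z)%:E * J (b + z)%R).
Proof.
pose psi := fun w : measurableTypeR R => (lap_density eps C ((w : R) - a))%:E * J w.
pose chi := fun w : measurableTypeR R => (lap_density eps C (w - b))%:E * J w.
pose chi' := fun z : measurableTypeR R => (lap_density eps C z)%:E * J (b + z)%R.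
have psi0 w : 0 <= psi w by rewrite mule_ge0 ?lee_fin ?dens_ge0.
have chi0' w : 0 <= chi' w by rewrite mule_ge0 ?lee_fin ?dens_ge0.
have chi0 w : 0 <= chi w by rewrite mule_ge0 ?lee_fin ?dens_ge0.
have c0 : (0 < expR (eps / C * `|a - b|))%R by rewrite expR_gt0.
have -> : \int[@lebesgue_measure R]_z ((lap_density eps C z)%:E * J (a + z)%R)
        = \int[@lebesgue_measure R]_z psi ((z : R) + a)%R.
  by apply: eq_integral => z _; rewrite /psi addrK addrC.
apply: le_trans (integral_shift_le psi a psi0) _.
apply: le_trans (integral_mono_nm _ psi (fun w => (expR (eps / C * `|a - b|))%:E * chi w) psi0 _) _.
  move=> w; rewrite /psi /chi muleA -EFinM lee_wpmul2r // lee_fin; exact: dens_ratio.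
apply: le_trans (integral_scale_le _ chi _ c0 chi0) _.
apply: lee_wpmul2l; first by rewrite lee_fin ltW.
have -> : \int[@lebesgue_measure R]_z chi z = \int[@lebesgue_measure R]_z chi' ((z : R) + - b)%R.
  by apply: eq_integral => z _; rewrite /chi /chi' addrCA subrr addr0.
exact: (le_trans (integral_shift_le chi' (- b)%R chi0') (le_refl _)).
Qed.

Lemma lap_iter_ge0 k (F : seq R -> \bar R) : (forall zs, 0 <= F zs) -> 0 <= lap_iter eps C k F.
Proof.
elim: k F => [|k IH] F F0 //=.
by apply: integral_ge0 => z _; rewrite mule_ge0 ?lee_fin ?dens_ge0 // IH.
Qed.

Lemma lap_iter_shift k (F : (nat -> R) -> \bar R) (a b : nat -> R) :
  (forall v, 0 <= F v) -> (forall i, (k <= i)%N -> a i = b i) ->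
  lap_iter eps C k (fun zs => F (fun i => a i + nth 0 zs i)%R) <=
  (expR (eps / C * \sum_(i < k) `|a i - b i|))%:E *
    lap_iter eps C k (fun zs => F (fun i => b i + nth 0 zs i)%R).
Proof.
elim: k F a b => [|k IH] F a b F0 ab /=.
  rewrite big_ord0 mulr0 expR0 mul1e.
  have -> : (fun i => a i + nth 0 [::] i)%R = (fun i => b i + nth 0 [::] i)%R.
    by apply: funext => i; rewrite ab.
  by [].
pose Fw (w : R) := fun v : nat -> R => F (fun i => if i is j.+1 then v j else w).
pose J := fun w : R => lap_iter eps C k (fun zs => Fw w (fun j => b j.+1 + nth 0 zs j)%R).
have Fw0 w v : 0 <= Fw w v by apply: F0.
have J0 w : 0 <= J w by apply: lap_iter_ge0.
have eqa z : (fun zs => F (fun i => a i + nth 0 (z :: zs) i)%R)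
    = (fun zs => Fw (a 0%N + z)%R (fun j => a j.+1 + nth 0 zs j)%R).
  by apply: funext => zs; rewrite /Fw; congr F; apply: funext => -[|i].
have eqb z : (fun zs => F (fun i => b i + nth 0 (z :: zs) i)%R)
    = (fun zs => Fw (b 0%N + z)%R (fun j => b j.+1 + nth 0 zs j)%R).
  by apply: funext => zs; rewrite /Fw; congr F; apply: funext => -[|i].
set c' := (expR (eps / C * \sum_(i < k) `|a i.+1 - b i.+1|)).
have c0 : (0 < c')%R by rewrite expR_gt0.
have H1 z : lap_iter eps C k (fun zs => F (fun i => a i + nth 0 (z :: zs) i)%R)
    <= c'%:E * J (a 0%N + z)%R.
  rewrite eqa; apply: IH => // i ki; exact: ab.
under eq_integral do rewrite eqa.
under [X in _ <= _ * X]eq_integral do rewrite eqb.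
apply: le_trans (integral_mono_nm _ _ (fun z : measurableTypeR R => c'%:E * ((lap_density eps C z)%:E * J (a 0%N + z)%R)) _ _) _.
- by move=> z; rewrite mule_ge0 ?lee_fin ?dens_ge0 // lap_iter_ge0.
- move=> z; rewrite muleCA; apply: lee_wpmul2l; first by rewrite lee_fin dens_ge0.
  by rewrite -eqa H1.
apply: le_trans (integral_scale_le _ _ _ c0 _) _.
  by move=> z; rewrite mule_ge0 ?lee_fin ?dens_ge0.
apply: le_trans.
  apply: lee_wpmul2l; first by rewrite lee_fin ltW.
  exact: (lap_1d J J0 (a 0%N) (b 0%N)).
rewrite muleA -EFinM -expRD big_ord_recl /=.
rewrite [X in (_ <= (expR X)%:E * _)]mulrDr addrC.
by [].
Qed.

Lemma lap_iter_scale k (F1 F2 : seq R -> \bar R) (c : R) : (0 < c)%R ->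
  (forall zs, 0 <= F1 zs) -> (forall zs, 0 <= F2 zs) ->
  (forall zs, F1 zs <= c%:E * F2 zs) ->
  lap_iter eps C k F1 <= c%:E * lap_iter eps C k F2.
Proof.
elim: k F1 F2 => [|k IH] F1 F2 c0 F10 F20 H //=.
apply: le_trans (integral_mono_nm _ _
  (fun z : measurableTypeR R => c%:E * ((lap_density eps C z)%:E *
      lap_iter eps C k (fun zs => F2 (z :: zs)))) _ _) _.
- by move=> z; rewrite mule_ge0 ?lee_fin ?dens_ge0 // lap_iter_ge0.
- move=> z; rewrite muleCA; apply: lee_wpmul2l; first by rewrite lee_fin dens_ge0.
  by apply: IH.
apply: integral_scale_le => // z.
by rewrite mule_ge0 ?lee_fin ?dens_ge0 // lap_iter_ge0.
Qed.
End Lap.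

End ModL.
Import ModL.

Module ModL2.
Import Order.TTheory GRing.Theory Num.Theory.
Local Open Scope classical_set_scope.
Local Open Scope ring_scope.

Section Lap2.
Context {R : realType} (d : nat) (eps C : R) (eps0 : 0 < eps) (C0 : 0 < C).

Lemma l1_clip (g : d.-tuple R) : l1norm (lap_clip C g) <= C / 2.
Proof.
set m := Num.max 1 (l1norm g / (C / 2)).
have m0 : 0 < m by rewrite lt_max ltr01.
have -> : l1norm (lap_clip C g) = l1norm g / m.
  rewrite /l1norm mulr_suml; apply: eq_bigr => i _.
  by rewrite tnth_mktuple normrM normfV (gtr0_norm m0).
have C2 : 0 < C / 2 by rewrite divr_gt0.
rewrite ler_pdivrMr // mulrC.
have : l1norm g / (C / 2) <= m by rewrite le_max lexx orbT.
by rewrite ler_pdivrMr // mulrC.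
Qed.

End Lap2.
Section Lap3.
Context {R : realType} (d : nat) (eps C : R) (eps0 : 0 < eps) (C0 : 0 < C).
Local Open Scope ereal_scope.
Lemma laplace_ldp (g g' : d.-tuple R) (F : d.-tuple R -> \bar R) : (forall y, 0 <= F y) ->
  laplace_mech_int eps C g F <= (expR eps)%:E * laplace_mech_int eps C g' F.
Proof.
move=> F0.
pose a i := nth 0%R (lap_clip C g : seq R) i.
pose b i := nth 0%R (lap_clip C g' : seq R) i.
pose F' (v : nat -> R) := F [tuple v i | i < d].
have Ea : laplace_mech_int eps C g F = lap_iter eps C d (fun zs => F' (fun i => a i + nth 0 zs i)%R).
  rewrite /laplace_mech_int /F'; congr lap_iter; apply: funext => zs; congr F.
  by apply: eq_mktuple => i; rewrite (tnth_nth 0%R).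
have Eb : laplace_mech_int eps C g' F = lap_iter eps C d (fun zs => F' (fun i => b i + nth 0 zs i)%R).
  rewrite /laplace_mech_int /F'; congr lap_iter; apply: funext => zs; congr F.
  by apply: eq_mktuple => i; rewrite (tnth_nth 0%R).
rewrite Ea Eb.
apply: le_trans (@lap_iter_shift R eps C eps0 C0 d F' a b _ _) _.
- by move=> v; apply: F0.
- by move=> i di; rewrite /a /b !nth_default // size_tuple.
apply: lee_wpmul2r; first by apply: (@lap_iter_ge0 R eps C eps0 C0) => zs; apply: F0.
rewrite lee_fin ler_expR.
have S : (\sum_(i < d) `|a i - b i| <= C)%R.
  apply: (@le_trans _ _ (l1norm (lap_clip C g) + l1norm (lap_clip C g'))%R).
    rewrite /l1norm -big_split /=; apply: ler_sum => i _.
    by rewrite /a /b -!(tnth_nth 0%R) ler_normB.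
  have := @l1_clip R d C C0 g; have := @l1_clip R d C C0 g'; lra.
have e0 : (0 <= eps / C)%R by rewrite divr_ge0 ?ltW.
apply: (le_trans (ler_wpM2l e0 S)).
by rewrite divfK ?gt_eqF.
Qed.
End Lap3.

End ModL2.
Import ModL2.

Module ModP.
Import Order.TTheory GRing.Theory Num.Theory.
Local Open Scope classical_set_scope.
Local Open Scope ring_scope.

Section PRS.
Context {R : realType} (d dh : nat) (eps C : R) (eps0 : 0 < eps) (C0 : 0 < C).

Let a := expR (eps / dh%:R).
Let u := 1 / (a + 1).

Lemma plus_prob_bounds (M : prs_code d dh) (g : d.-tuple R) i :
  u <= prs_plus_prob eps C M g i <= a * u /\
  u <= 1 - prs_plus_prob eps C M g i <= a * u.
Proof.
rewrite /prs_plus_prob -/a.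
set ub := prs_ubar C M g i.
have ub1 : - C <= ub <= C.
  rewrite /ub /prs_ubar; apply/andP; split.
    rewrite le_min le_max lexx /= ?andbT ?orbT.
    by apply: (@le_trans _ _ 0); [rewrite oppr_le0|]; exact: ltW.
  by rewrite ge_min lexx.
move/andP: ub1 => [ub1 ub2].
have {}ub1 : - C <= ub := ub1. have {}ub2 : ub <= C := ub2.
have a1 : 1 <= a.
  have := expR_ge1Dx (eps / dh%:R); have : 0 <= eps / dh%:R by rewrite divr_ge0 ?ler0n ?ltW.
  rewrite -/a; lra.
rewrite -/u.
set t := (ub + C) / (2 * C); set w := (a - 1) / (a + 1).
have t0 : 0 <= t by apply: divr_ge0; [lra | rewrite mulr_ge0 // ltW].
have t1 : t <= 1 by rewrite ler_pdivrMr ?mulr_gt0 //; lra.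
have w0 : 0 <= w by rewrite divr_ge0 //; lra.
have a0 : a + 1 != 0 by rewrite gt_eqF //; lra.
have uE : (a + 1) * u = 1 by rewrite /u mulrC divfK.
have wE : w = (a - 1) * u by rewrite /w /u div1r.
have tw0 : 0 <= t * w by rewrite mulr_ge0.
have tw1 : 0 <= (1 - t) * w by rewrite mulr_ge0 // subr_ge0.
have H1 : a * u = u + w by rewrite wE mulrBl mul1r addrC subrK.
have H2 : a * u + u = 1 by rewrite -uE mulrDl mul1r.
rewrite mulrBl mul1r in tw1.
split; apply/andP; split; lra.
Qed.


Lemma u_gt0 : 0 < u.
Proof.
rewrite /u div1r invr_gt0; have := expR_gt0 (eps / dh%:R); rewrite -/a; lra.
Qed.

Lemma q_bounds (M : prs_code d dh) (g : d.-tuple R) i (b : bool) :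
  u <= (if b then prs_plus_prob eps C M g i else 1 - prs_plus_prob eps C M g i) <= a * u.
Proof. by have [] := plus_prob_bounds M g i; case: b. Qed.

Lemma sign_prob_ge0 (M : prs_code d dh) (g : d.-tuple R) s : 0 <= prs_sign_prob eps C M g s.
Proof.
apply: prodr_ge0 => i _; have /andP[+ _] := q_bounds M g i (s i).
by apply: le_trans; exact: ltW u_gt0.
Qed.

Lemma sign_prob_ratio (dh0 : (0 < dh)%N) (M : prs_code d dh) (g g' : d.-tuple R) s :
  prs_sign_prob eps C M g s <= expR eps * prs_sign_prob eps C M g' s.
Proof.
rewrite /prs_sign_prob.
apply: (@le_trans _ _ (\prod_(i < dh) (a * (if s i then prs_plus_prob eps C M g' i
                                           else 1 - prs_plus_prob eps C M g' i)))).
  apply: ler_prod => i _.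
  have /andP[l1 u1] := q_bounds M g i (s i).
  have /andP[l2 u2] := q_bounds M g' i (s i).
  have a0 : 0 <= a by rewrite ltW // expR_gt0.
  apply/andP; split; first by apply: le_trans l1; exact: ltW u_gt0.
  by apply: le_trans u1 _; apply: ler_wpM2l.
rewrite big_split /= prodr_const card_ord /a -expRM_natr divfK //.
by rewrite pnatr_eq0 -lt0n.
Qed.

Lemma prs_entry_prob_ge0 c : 0 <= prs_entry_prob R c.
Proof. by rewrite /prs_entry_prob; case: ifP. Qed.

Lemma prs_ldp (dh0 : (0 < dh)%N) (g g' : d.-tuple R) (F : d.-tuple R -> \bar R) :
  (forall y, (0 <= F y)%E) ->
  (prs_mech_int dh eps C g F <= (expR eps)%:E * prs_mech_int dh eps C g' F)%E.
Proof.
move=> F0; rewrite /prs_mech_int.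
have pM0 M : 0 <= prs_matrix_prob R M by apply: prodr_ge0 => ij _; exact: prs_entry_prob_ge0.
rewrite ge0_sume_distrr; last first.
  move=> M _; apply: sume_ge0 => s _; rewrite mule_ge0 // lee_fin mulr_ge0 //.
  exact: sign_prob_ge0.
apply: lee_sum => M _; rewrite ge0_sume_distrr; last first.
  by move=> s _; rewrite mule_ge0 // lee_fin mulr_ge0 // sign_prob_ge0.
apply: lee_sum => s _; rewrite muleA -EFinM; apply: lee_wpmul2r => //.
rewrite lee_fin mulrCA; apply: ler_wpM2l => //; exact: sign_prob_ratio.
Qed.
End PRS.

End ModP.
Import ModP.

Module ModM.
Import Order.TTheory GRing.Theory Num.Theory.
Local Open Scope classical_set_scope.
Local Open Scope ring_scope.

Section Main.
Context {R : realType} (d : nat) (eps C eta : R) (Bmax : nat) (k : mech_kind)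
  (Psi : Type) (G : Psi -> R.-pker (d.-tuple R) ~> (d.-tuple R)).
Hypotheses (eps0 : 0 < eps) (C0 : 0 < C) (kok : mech_ok k d).
Local Open Scope ereal_scope.

Lemma mech_ge0 (g : d.-tuple R) F : (forall y, 0 <= F y) -> 0 <= mech_int k eps C g F.
Proof.
move=> F0; case: k kok => [|dh] /= _.
  by apply: (@lap_iter_ge0 R eps C eps0 C0) => zs; apply: F0.
apply: sume_ge0 => M _; apply: sume_ge0 => s _; rewrite mule_ge0 // lee_fin mulr_ge0 //.
  by apply: prodr_ge0 => ij _; exact: prs_entry_prob_ge0.
exact: (@sign_prob_ge0 R d dh eps C eps0 C0).
Qed.

Lemma mech_ldp (g g' : d.-tuple R) F : (forall y, 0 <= F y) ->
  mech_int k eps C g F <= (expR eps)%:E * mech_int k eps C g' F.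
Proof.
move=> F0; case: k kok => [|dh] /= H.
  exact: (@laplace_ldp R d eps C eps0 C0).
apply: (@prs_ldp R d dh eps C eps0 C0) => //.
by case/andP: H.
Qed.

Lemma mech_scale (g : d.-tuple R) F1 F2 (c : R) : (0 < c)%R ->
  (forall y, 0 <= F1 y) -> (forall y, 0 <= F2 y) -> (forall y, F1 y <= c%:E * F2 y) ->
  mech_int k eps C g F1 <= c%:E * mech_int k eps C g F2.
Proof.
move=> c0 F10 F20 H; case: k kok => [|dh] /= _.
  by apply: (@lap_iter_scale R eps C eps0 C0) => // zs.
have pM0 M : (0 <= prs_matrix_prob R M)%R.
  by apply: prodr_ge0 => ij _; exact: prs_entry_prob_ge0.
rewrite /prs_mech_int ge0_sume_distrr; last first.
  move=> M _; apply: sume_ge0 => s _; rewrite mule_ge0 // lee_fin mulr_ge0 //.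
  exact: (@sign_prob_ge0 R d dh eps C eps0 C0).
apply: lee_sum => M _; rewrite ge0_sume_distrr; last first.
  by move=> s _; rewrite mule_ge0 // lee_fin mulr_ge0 // (@sign_prob_ge0 R d dh eps C eps0 C0).
apply: lee_sum => s _; rewrite muleCA; apply: lee_wpmul2l => //.
by rewrite lee_fin mulr_ge0 // (@sign_prob_ge0 R d dh eps C eps0 C0).
Qed.

Lemma report_ge0 psi theta F : (forall y, 0 <= F y) -> 0 <= report_int eps C k G psi theta F.
Proof. by move=> F0; apply: integral_ge0 => g _; exact: mech_ge0. Qed.

Lemma report_ldp psi psi' theta F : (forall y, 0 <= F y) ->
  report_int eps C k G psi theta F <= (expR eps)%:E * report_int eps C k G psi' theta F.
Proof.
move=> F0; rewrite /report_int.
apply: (@two_prob_le _ _ _ _ _ theta) => //.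
- exact: prob_kernel.
- exact: prob_kernel.
- exact: expR_gt0.
- by move=> g; exact: mech_ge0.
- by move=> g g'; exact: mech_ldp.
Qed.

Lemma report_scale psi theta F1 F2 (c : R) : (0 < c)%R ->
  (forall y, 0 <= F1 y) -> (forall y, 0 <= F2 y) -> (forall y, F1 y <= c%:E * F2 y) ->
  report_int eps C k G psi theta F1 <= c%:E * report_int eps C k G psi theta F2.
Proof.
move=> c0 F10 F20 H; rewrite /report_int.
apply: le_trans (integral_mono_nm _ _ (fun g => c%:E * mech_int k eps C g F2) _ _) _.
- by move=> g; exact: mech_ge0.
- by move=> g; exact: mech_scale.
apply: integral_scale_le => // g; exact: mech_ge0.
Qed.

Lemma run_ge0 psis m theta0 hist F : (forall h, 0 <= F h) ->
  0 <= run_int eps C eta Bmax k G psis m theta0 hist F.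
Proof.
move=> F0; elim: m hist => [|m IH] hist /=; first exact: F0.
by apply: report_ge0 => y; exact: IH.
Qed.

Lemma run_eq psis1 psis2 m theta0 hist F :
  (forall j, (size hist <= j)%N -> psis1 j = psis2 j) ->
  run_int eps C eta Bmax k G psis1 m theta0 hist F =
  run_int eps C eta Bmax k G psis2 m theta0 hist F.
Proof.
elim: m hist => [|m IH] hist H //=.
rewrite H //; congr report_int; apply: funext => y; apply: IH => j.
by rewrite size_rcons => hj; apply: H; exact: ltnW.
Qed.

Lemma run_ldp psis n psi psi' m theta0 hist F : (forall h, 0 <= F h) ->
  (size hist <= n)%N ->
  run_int eps C eta Bmax k G (set_psi psis n psi) m theta0 hist F <=
  (expR eps)%:E * run_int eps C eta Bmax k G (set_psi psis n psi') m theta0 hist F.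
Proof.
move=> F0; have e1 : (1 <= expR eps)%R.
  by apply: le_trans (expR_ge1Dx eps); rewrite lerDl ltW.
elim: m hist => [|m IH] hist hn /=.
  by rewrite lee_pemull // lee_fin.
have [lt|eq] : (size hist < n)%N \/ size hist = n.
  by move: hn; rewrite leq_eqVlt => /orP[/eqP->|->]; [right|left].
  have -> : set_psi psis n psi (size hist) = psis (size hist) by rewrite /set_psi ltn_eqF.
  have -> : set_psi psis n psi' (size hist) = psis (size hist) by rewrite /set_psi ltn_eqF.
  apply: report_scale.
  - exact: expR_gt0.
  - by move=> y; exact: run_ge0.
  - by move=> y; exact: run_ge0.
  - by move=> y; apply: IH; rewrite size_rcons.
have -> : set_psi psis n psi (size hist) = psi by rewrite /set_psi eq eqxx.
have -> : set_psi psis n psi' (size hist) = psi' by rewrite /set_psi eq eqxx.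
rewrite [X in X <= _](_ : _ = report_int eps C k G psi (global_params eta Bmax theta0 hist)
   (fun y => run_int eps C eta Bmax k G (set_psi psis n psi') m theta0 (rcons hist y) F)).
  by apply: report_ldp => y; exact: run_ge0.
congr report_int; apply: funext => y; apply: run_eq => j.
rewrite size_rcons eq /set_psi => hj.
by rewrite (gtn_eqF hj).
Qed.
End Main.

End ModM.
Import ModM.

Import Order.TTheory GRing.Theory Num.Theory.
Local Open Scope classical_set_scope.
Local Open Scope ring_scope.

Theorem theorem3 (R : realType) (d N Bmax : nat) (eps C eta : R) (k : mech_kind)
  (Psi : Type) (G : Psi -> R.-pker (d.-tuple R) ~> (d.-tuple R))
  (P0 : probability (d.-tuple R) R) :
  0 < eps -> 0 < C -> 0 < eta -> (0 < Bmax)%N -> mech_ok k d ->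
  (forall (n : nat) (psis : nat -> Psi) (psi psi' : Psi)
          (E : set (d.-tuple R * N.-tuple (d.-tuple R))),
     (n < N)%N -> measurable E ->
     (@pgc_prob R d eps C eta Bmax k Psi G N P0 (set_psi psis n psi) E
      <= (expR eps)%:E * @pgc_prob R d eps C eta Bmax k Psi G N P0 (set_psi psis n psi') E)%E)
  /\
  (forall (n : nat) (psi psi' : Psi) (theta0 : d.-tuple R)
          (hist : seq (d.-tuple R)) (A : set (d.-tuple R)),
     (n < N)%N -> size hist = n -> measurable A ->
     (report_prob eps C k G psi (global_params eta Bmax theta0 hist) A
      <= (expR eps)%:E * report_prob eps C k G psi' (global_params eta Bmax theta0 hist) A)%E).
Proof.

Proof.
move=> eps0 C0 eta0 B0 kok; split.
- move=> n psis psi psi' E nN mE; rewrite /pgc_prob.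
  have I0 : forall (th : d.-tuple R) h,
      (0%:E <= ((\1_E (th, (insubd (nseq_tuple N (vzero R d)) h : N.-tuple _)) : R))%:E)%E.
    by move=> th h; rewrite lee_fin indicE ler0n.
eapply le_trans; first eapply (integral_mono_nm P0).
  + by move=> th; apply: run_ge0 => // h; exact: I0.
  + by move=> th; apply: run_ldp => // h; exact: I0.

  apply: integral_scale_le; first exact: expR_gt0.
  by move=> th; apply: run_ge0 => // h; exact: I0.
- move=> n psi psi' th hist A _ _ _.
  by apply: report_ldp => // y; rewrite /= lee_fin indicE ler0n.
Qed.
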